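(* Let $\tau\in(0,1]$ and suppose $k\,\alpha^{(2-\tau)d}\ge 2$. Let $u,v\in V$ be distinct with $|\Gamma(u)\cap\Gamma(v)|\ge\tau d$. Then, under the Fast-Filter model described in the context, with probability at least $1/2$ there exists $i\in[k]$ with $u\in S_i$ and $v\in S_i$.
   Context: Let $G=(U,V,E)$ be a bipartite graph with $|U|=M$ and $|V|=N$. For $v\in V$ let $\Gamma(v)\subseteq U$ be its set of neighbours, and assume $|\Gamma(v)|=d\ge 1$ for every $v\in V$. Let $k=2^{m}$ and $\alpha=2^{-r}$, where $m,r$ are positive integers. Identify $[k]=\{1,\dots,k\}$ bijectively with the vector space $\mathrm{GF}(2)^m$ (for instance via the binary representation of $i-1$). Fast-Filter model: for each $u\in U$, independently draw a uniformly random matrix $A'_u\in\mathrm{GF}(2)^{r\times m}$ and a uniformly random vector $b'_u\in\mathrm{GF}(2)^{r}$; all of these are mutually independent. For $v\in V$, let $A^v$ be the $(dr)\times m$ matrix obtained by stacking the matrices $A'_u$, $u\in\Gamma(v)$, in a fixed order, and let $b^v\in\mathrm{GF}(2)^{dr}$ be obtained by stacking the $b'_u$, $u\in\Gamma(v)$, in the same order. For $i\in[k]$ (viewed as a vector in $\mathrm{GF}(2)^m$), the survival set is $S_i=\{v\in V: A^v i+b^v=0\}$, with arithmetic over $\mathrm{GF}(2)$. *)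

(* Defs.v *)
From Stdlib Require Import Reals.
From HB Require Import structures.
From mathcomp Require Import all_boot all_algebra.
Set Implicit Arguments. Unset Strict Implicit. Unset Printing Implicit Defensive.

(* An outcome of the Fast-Filter randomness: for each u in U, a matrix
   A'_u in GF(2)^{r x m} and a vector b'_u in GF(2)^r.  The uniform,
   independent draw is the uniform distribution on this finite type. *)
Definition outcome (U : finType) (r m : nat) : finType :=
  {ffun U -> 'M['F_2]_(r, m) * 'cV['F_2]_r}.

(* x in S_i : A^x i + b^x = 0, where A^x, b^x stack the blocks A'_y, b'_y
   for y in Gam x; the stacked system vanishes iff every block vanishes. *)
Definition survives (U V : finType) (Gam : V -> {set U}) (r m : nat)
  (w : outcome U r m) (i : 'cV['F_2]_m) (x : V) : bool :=
  [forall y in Gam x, (((w y).1 *m i + (w y).2) == 0)%R].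

(* The event: some i in [k] = GF(2)^m with u in S_i and v in S_i. *)
Definition collide (U V : finType) (Gam : V -> {set U}) (r m : nat) (u v : V)
  : {set outcome U r m} :=
  [set w : outcome U r m | [exists i : 'cV['F_2]_m,
      survives Gam w i u && survives Gam w i v]].

Definition prob (T : finType) (E : {set T}) : R :=
  Rdiv (INR #|E|) (INR #|T|).

(* Main.v *)
Require Import Defs.
From Stdlib Require Import Reals Lra.
From HB Require Import structures.
From mathcomp Require Import all_boot all_algebra ring zify.
Set Implicit Arguments. Unset Strict Implicit. Unset Printing Implicit Defensive.
Import GRing.Theory.
Lemma card_prodF (U T : finType) (F : U -> pred T) :
  #|[pred w : {ffun U -> T} | [forall y, w y \in F y]]| = \prod_y #|F y|.
Proof.
have -> : #|[pred w : {ffun U -> T} | [forall y, w y \in F y]]| =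
   #|(family F : simpl_pred {ffun U -> T})|.
  apply: eq_card => w; rewrite [in RHS]unfold_in /=.
  by [].
by rewrite (@card_family U (fun _ => T) F) foldrE big_map big_enum.
Qed.

Lemma card_cV r : #|{: 'cV['F_2]_r}| = 2 ^ r.
Proof. by rewrite card_mx card_Fp // muln1. Qed.

Lemma fibre_eq r m (x : 'cV['F_2]_m) (c : 'cV['F_2]_r) : x != 0%R ->
  #|[set A : 'M['F_2]_(r, m) | (A *m x == c)%R]| =
  #|[set A : 'M['F_2]_(r, m) | (A *m x == 0)%R]|.
Proof.
move=> xn0.
have [t xt] : exists t, x t ord0 != 0%R.
  apply/existsP; apply: contraR xn0 => /existsPn H.
  apply/eqP/matrixP => a b; rewrite ord1 mxE; exact/eqP/negPn/H.
have xt1 : x t ord0 = 1%R.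
  move: xt; case: (x t ord0) => [[|[|n]] Hn] //= _; exact: val_inj.
set A0 := (c *m delta_mx 0 t)%R.
have A0x : (A0 *m x = c)%R.
  rewrite /A0 -mulmxA -rowE.
  have -> : row t x = (1%:M)%R.
    by apply/matrixP => a b; rewrite !ord1 !mxE xt1.
  by rewrite mulmx1.
symmetry; rewrite -(card_imset _ (@addIr _ A0)); apply: eq_card => A.
apply/imsetP/idP => [[B] | ].
  by rewrite !inE => /eqP Bx ->; rewrite mulmxDl Bx A0x add0r.
rewrite inE => /eqP Ac.
exists (A - A0)%R; last by rewrite subrK.
by rewrite inE mulmxBl Ac A0x subrr.
Qed.

Lemma kernel_card r m (x : 'cV['F_2]_m) : x != 0%R ->
  #|[set A : 'M['F_2]_(r, m) | (A *m x == 0)%R]| * 2 ^ r = #|{: 'M['F_2]_(r, m)}|.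
Proof.
move=> xn0.
rewrite -[RHS]sum1_card (partition_big (fun A => (A *m x)%R) xpredT) //=.
rewrite -(card_cV r) mulnC -sum_nat_const; apply: eq_bigr => c _.
rewrite sum1dep_card.
by rewrite (fibre_eq c xn0).
Qed.

Definition gd r m (i : 'cV['F_2]_m) (p : 'M['F_2]_(r,m) * 'cV['F_2]_r) : bool :=
  ((p.1 *m i + p.2) == 0)%R.

Lemma gdE r m i (p : 'M['F_2]_(r,m) * 'cV['F_2]_r) : gd i p = (p.2 == - (p.1 *m i))%R.
Proof. by rewrite /gd addrC addr_eq0. Qed.

Lemma card_gd1 r m (i : 'cV['F_2]_m) :
  #|[pred p : 'M['F_2]_(r,m) * 'cV['F_2]_r | gd i p]| = #|{: 'M['F_2]_(r, m)}|.
Proof.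
set f := fun A : 'M['F_2]_(r,m) => (A, - (A *m i))%R.
have finj : injective f by move=> A B [].
rewrite -cardsT -(card_imset _ finj); apply: eq_card => -[A b].
rewrite inE /= gdE /=; apply/eqP/imsetP => [-> | [B _ [-> ->]]] //.
by exists A; rewrite ?inE.
Qed.

Lemma card_gd2 r m (i j : 'cV['F_2]_m) : i != j ->
  #|[pred p : 'M['F_2]_(r,m) * 'cV['F_2]_r | gd i p && gd j p]| * 2 ^ r
    = #|{: 'M['F_2]_(r, m)}|.
Proof.
move=> ij; rewrite -(@kernel_card r m (i - j)%R); last by rewrite subr_eq0.
congr (_ * _).
set f := fun A : 'M['F_2]_(r,m) => (A, - (A *m i))%R.
have finj : injective f by move=> A B [].
rewrite -(card_imset _ finj); apply: eq_card => -[A b].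
rewrite inE /= !gdE /=; apply/andP/imsetP => [[/eqP -> /eqP e] | [B]].
  exists A => //; rewrite inE mulmxBr subr_eq0.
  by rewrite -eqr_opp -e.
rewrite inE mulmxBr subr_eq0 => /eqP e [-> ->].
by rewrite e.
Qed.

Lemma arith (L M B Z Q : nat) : 1 < L -> 2*(L*(L*M*(M*B))) <= L^2*Z + Q ->
  Q <= L*M*(M*B + L*M*B) -> M*M*B <= 2*Z.
Proof.
move=> L2 k1 k2.
have e1 : 2*(L*(L*M*(M*B))) = 2*(L*(L*(M*M*B))) by ring.
have e2 : L*M*(M*B + L*M*B) = L*(M*M*B) + L*(L*(M*M*B)) by ring.
have e3 : L^2*Z = L*(L*Z) by ring.
rewrite e1 e3 in k1; rewrite e2 in k2.
set Y := M*M*B in k1 k2 *.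
have h1 : L * (L * Y) <= L * (L * Z + Y).
  rewrite mulnDr; move: k1 k2; set A1 := L * (L * Y); set A2 := L * (L * Z); set A3 := L * Y.
  lia.
rewrite leq_pmul2l ?(ltnW L2) // in h1.
have h2 : 2 * Y <= L * Y by rewrite leq_mul2r L2 orbT.
rewrite -(@leq_pmul2l L) ?(ltnW L2) // mulnCA.
move: h1 h2; set A1 := L * Y; set A2 := L * Z. lia.
Qed.

Lemma sum_b2n (T : finType) (P : pred T) : \sum_(w : T) (P w : nat) = #|[set w | P w]|.
Proof. by rewrite -sum1dep_card [RHS]big_mkcond; apply: eq_bigr => w _; case: (P w). Qed.

Lemma count_main (U V : finType) (Gam : V -> {set U}) r m (u v : V) :
  (2 * 2 ^ (r * #|Gam u :|: Gam v|) <= 2 ^ m)%N ->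
  (#|{: outcome U r m}| <= 2 * #|collide Gam r m u v|)%N.
Proof.
move=> hk.
set S := Gam u :|: Gam v; set D := #|S|.
pose T := ('M['F_2]_(r,m) * 'cV['F_2]_r)%type.
pose ga (w : outcome U r m) i := [forall y, (y \in S) ==> gd i (w y)].
have survE w i : survives Gam w i u && survives Gam w i v = ga w i.
  apply/andP/forallP => [[/forallP hu /forallP hv] y | h].
    apply/implyP; rewrite inE => /orP [] yin.
      by have := hu y; rewrite yin.
    by have := hv y; rewrite yin.
  split; apply/forallP => y; apply/implyP => yin; have := h y;
    by rewrite inE yin ?orbT.
pose E := #|{: T}| ^ #|~: S|.
have cnt i j : #|[set w : outcome U r m | ga w i && ga w j]| =
    #|[pred p : T | gd i p && gd j p]| ^ D * E.
  pose F y := if y \in S then [pred p : T | gd i p && gd j p] else predT.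
  have -> : #|[set w : outcome U r m | ga w i && ga w j]| =
     #|[pred w : {ffun U -> T} | [forall y, w y \in F y]]|.
    apply: eq_card => w; rewrite !inE /=.
    apply/andP/forallP => [[/forallP h1 /forallP h2] y | h].
      rewrite /F; case: ifP => yS //=; rewrite !unfold_in /=.
      by have := h1 y; have := h2 y; rewrite yS /= => -> ->.
    by split; apply/forallP => y; apply/implyP => yS; have := h y;
      rewrite /F yS unfold_in /= => /andP[].
  rewrite card_prodF (bigID (fun y => y \in S)) /=.
  rewrite -!prod_nat_const /E; congr (_ * _).
    by apply: eq_bigr => y yS; rewrite /F yS.
  rewrite -prod_nat_const (eq_bigr (fun _ => #|{: T}|)); last first.
    by move=> y yS; rewrite /F (negbTE yS); apply: eq_card.
  by apply: eq_bigl => y; rewrite in_setC.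
pose a := #|{: 'M['F_2]_(r, m)}|; pose P := 2 ^ r; pose b := a %/ P.
have rDm : r * D < m.
  rewrite -(@ltn_exp2l 2) //; apply: leq_trans hk; rewrite mul2n -addnn -addn1 leq_add2l expn_gt0 //.
have m0 : 0 < m by apply: leq_ltn_trans rDm.
have aE : a = b * P.
  rewrite /b divnK // /a /P card_mx card_Fp // -(subnK m0) mulnDr muln1 expnD.
  exact: dvdn_mull.
have c_ii i : #|[set w : outcome U r m | ga w i && ga w i]| = a ^ D * E.
  by rewrite cnt; congr (_ ^ _ * _); rewrite /a -(card_gd1 r i); apply: eq_card => p; rewrite !inE andbb.
have c_ij i j : i != j -> #|[set w : outcome U r m | ga w i && ga w j]| = b ^ D * E.
  move=> ij; rewrite cnt; congr (_ ^ _ * _).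
  by rewrite /b /a -(card_gd2 r ij) mulnK // expn_gt0.
have tE : #|{: T}| = a * P by rewrite card_prod card_cV.
have OmE : #|{: outcome U r m}| = #|{: T}| ^ D * E.
  by rewrite card_ffun -expnD /D cardsC.
pose X (w : outcome U r m) := \sum_i (ga w i : nat).
pose ex (w : outcome U r m) := [exists i, ga w i].
pose L := 2 ^ (m - r * D); pose M := 2 ^ (r * D).
have ZE : #|collide Gam r m u v| = \sum_w (ex w : nat).
  rewrite sum_b2n; apply: eq_card => w; rewrite !inE.
  by apply: eq_existsb => i; rewrite survE.
have pw w : 2 * (L * X w) <= L ^ 2 * ex w + X w ^ 2.
  case exw: (ex w); first by rewrite muln1; exact: (nat_Cauchy L (X w)).1.
  have -> : X w = 0.
    apply: big1 => i _; move/negbT: exw => /existsPn /(_ i) /negbTE -> //.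
  by rewrite !muln0.
have sumX : \sum_w X w = \sum_i #|[set w : outcome U r m | ga w i && ga w i]|.
  rewrite exchange_big; apply: eq_bigr => i _; rewrite sum_b2n.
  by apply: eq_card => w; rewrite !inE andbb.
have sumX2 : \sum_w X w ^ 2 = \sum_i \sum_j #|[set w : outcome U r m | ga w i && ga w j]|.
  under eq_bigr do rewrite -mulnn big_distrlr /=.
  rewrite exchange_big; apply: eq_bigr => i _.
  rewrite exchange_big; apply: eq_bigr => j _.
  by rewrite -sum_b2n; apply: eq_bigr => w _; rewrite mulnb.
pose k := 2 ^ m; pose B := b ^ D * E.
have MP : M = P ^ D by rewrite /M /P expnM.
have aDE : a ^ D * E = M * B by rewrite /B aE expnMn MP [b ^ D * _]mulnC -mulnA.
have N1 : \sum_w X w = k * (M * B).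
  rewrite sumX (eq_bigr (fun _ => M * B)); last by move=> i _; rewrite c_ii aDE.
  by rewrite sum_nat_const card_cV.
have N2 : \sum_w X w ^ 2 <= k * (M * B + k * B).
  have -> : k * (M * B + k * B) = \sum_(i : 'cV['F_2]_m) (M * B + k * B).
    by rewrite sum_nat_const card_cV.
  rewrite sumX2; apply: leq_sum => i _.
  rewrite (bigD1 i) //= c_ii aDE leq_add2l.
  rewrite (eq_bigr (fun _ => B)); last by move=> j ji; rewrite c_ij // eq_sym.
  rewrite sum_nat_cond_const leq_mul2r; apply/orP; right.
  by rewrite /k -(card_cV m); exact: max_card.
have key : \sum_w 2 * (L * X w) <= \sum_w (L ^ 2 * ex w + X w ^ 2) by apply: leq_sum => w _; exact: pw.
rewrite -big_distrr -big_distrr /= big_split /= -big_distrr /= -ZE N1 in key.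
have kLM : k = L * M by rewrite /k /L /M -expnD subnK // ltnW.
have L2 : 2 <= L by rewrite /L -{1}(expn1 2) leq_exp2l // subn_gt0.
have OmE' : #|{: outcome U r m}| = M * M * B.
  by rewrite OmE tE aE !expnMn -MP /B; ring.
rewrite OmE'; move: key N2; rewrite kLM.
set Z := #|collide Gam r m u v|; set Q := \sum_i X i ^ 2; move=> key N2.
exact: (arith L2 key N2).
Qed.

Local Open Scope R_scope.

Lemma INR_expn (n e : nat) : INR (n ^ e)%N = INR n ^ e.
Proof. elim: e => [|e IH] //=; by rewrite expnS -multE mult_INR IH. Qed.

Theorem mainTheorem4 (U V : finType) (Gam : V -> {set U}) (d m r : nat)
  (tau : R)
  (hd : (1 <= d)%N) (hm : (0 < m)%N) (hr : (0 < r)%N)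
  (hdeg : forall x : V, #|Gam x| = d)
  (htau0 : 0 < tau) (htau1 : tau <= 1)
  (hk : INR (2 ^ m)%N * Rpower (/ INR (2 ^ r)%N) ((2 - tau) * INR d) >= 2)
  (u v : V) (huv : u <> v)
  (hcommon : INR #|Gam u :&: Gam v| >= tau * INR d) :
  prob (collide Gam r m u v) >= / 2.
Proof.
set D := #|Gam u :|: Gam v|.
have hUI := cardsUI (Gam u) (Gam v).
rewrite !hdeg in hUI.
have hD : INR D <= (2 - tau) * INR d.
  have := f_equal INR hUI; rewrite -!plusE !plus_INR -/D. lra.
set P := INR (2 ^ r)%N.
have P2 : 2 <= P.
  rewrite /P; have := @le_INR 2 (2 ^ r)%N; rewrite /= => h; apply: h.
  apply/leP; rewrite -{1}(expn1 2) leq_exp2l //.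
have lnP : 0 < ln P by rewrite -ln_1; apply: ln_increasing; lra.
have hpow : Rpower (/ P) ((2 - tau) * INR d) <= / INR (2 ^ (r * D))%N.
  rewrite expnM INR_expn -/P -pow_inv -Rpower_pow; last by apply: Rinv_0_lt_compat; lra.
  rewrite /Rpower ln_Rinv; last by lra.
  have hle : (2 - tau) * INR d * - ln P <= INR D * - ln P by nra.
  case: (Rle_lt_or_eq_dec _ _ hle) => [hlt|->]; last by lra.
  by apply: Rlt_le; apply: exp_increasing.
have hM : 0 < INR (2 ^ (r * D))%N by apply: lt_0_INR; apply/ltP; rewrite expn_gt0.
have hk2 : (2 * 2 ^ (r * D) <= 2 ^ m)%N.
  apply/leP; apply: INR_le; rewrite mult_INR /=.
  have hk0 : 0 <= INR (2 ^ m)%N by apply: pos_INR.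
  have : INR (2 ^ m)%N * / INR (2 ^ (r * D))%N >= 2.
    apply: Rge_trans hk; apply: Rle_ge; apply: Rmult_le_compat_l => //.
  move=> h.
  have : INR (2 ^ m)%N * / INR (2 ^ (r * D))%N * INR (2 ^ (r * D))%N >= 2 * INR (2 ^ (r * D))%N.
    by apply: Rle_ge; apply: Rmult_le_compat_r; lra.
  rewrite Rmult_assoc Rinv_l; lra.
have hc := count_main hk2.
have hN : (0 < #|{: outcome U r m}|)%N.
  apply/card_gt0P; by exists [ffun => (0%R, 0%R)].
rewrite /prob.
have h1 : INR #|{: outcome U r m}| <= 2 * INR #|collide Gam r m u v|.
  have := le_INR _ _ (elimT leP hc); by rewrite mult_INR.
have h2 : 0 < INR #|{: outcome U r m}| by apply: lt_0_INR; apply/ltP.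
apply: Rle_ge; unfold Rdiv.
apply: (Rmult_le_reg_r (INR #|{: outcome U r m}|)) => //.
rewrite Rmult_assoc Rinv_l; lra.
Qed.
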